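(* Let $\lambda_1\neq\lambda_2$ be real numbers, $n_1,n_2$ positive integers, $n=n_1+n_2$, and let $\mathcal{F}$ and $\mathcal{D}$ be finite sets of real numbers with $\{\lambda_1,\lambda_2\}\cap\mathcal{F}=\emptyset$. Then there exists $A\in\mathcal{S}(K_n)$ with spectrum $\{\lambda_1^{(n_1)},\lambda_2^{(n_2)}\}$ such that for every vertex $v$ of $K_n$ the matrix $A(v)$ has no eigenvalue in $\mathcal{F}$, and no diagonal entry of $A$ lies in $\mathcal{D}$.
   Context: $\mathcal{S}(K_n)$ is the set of $n\times n$ real symmetric matrices all of whose off-diagonal entries are nonzero. $A(v)$ denotes the submatrix of $A$ obtained by deleting row and column $v$. $\lambda^{(k)}$ denotes $k$ copies of $\lambda$. *)

(* Defs.v *)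
From HB Require Import structures.
From mathcomp Require Import all_boot all_order all_algebra.
From mathcomp Require Import reals.
Set Implicit Arguments. Unset Strict Implicit. Unset Printing Implicit Defensive.
Import Order.TTheory GRing.Theory Num.Theory.
Local Open Scope ring_scope.

Definition SKn (R : realType) (n : nat) (A : 'M[R]_n) : Prop :=
  A^T = A /\ (forall i j : 'I_n, i != j -> A i j != 0).

Definition del_vertex (R : realType) (n : nat) (A : 'M[R]_n) (v : 'I_n) : 'M[R]_n.-1 :=
  \matrix_(i < n.-1, j < n.-1) A (lift v i) (lift v j).

(* Main.v *)
Require Import Defs.
From HB Require Import structures.
From mathcomp Require Import all_boot all_order all_algebra.
From mathcomp Require Import reals.
From mathcomp Require Import ring lra.
Import Order.TTheory GRing.Theory Num.Theory.
Local Open Scope ring_scope.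
Set Implicit Arguments. Unset Strict Implicit.

Lemma no_eig (R : realType) n (A : 'M[R]_n) (l1 l2 mu : R) (v : 'I_n) :
  A *m A = (l1 + l2) *: A - (l1 * l2)%:M ->
  mu != l1 -> mu != l2 -> mu != l1 + l2 - A v v ->
  ~~ eigenvalue (del_vertex A v) mu.
Proof.
move=> AA h1 h2 h3; apply/eigenvalueP => -[y yM ynz].
pose z : 'rV[R]_n := \row_j (if unlift v j is Some k then y 0 k else 0).
have zl k : z 0 (lift v k) = y 0 k by rewrite mxE liftK.
have zv : z 0 v = 0 by rewrite mxE unlift_none.
clearbody z.
pose c := (z *m A) 0 v.
have zA : z *m A = mu *: z + c *: delta_mx 0 v.
  apply/rowP => j; rewrite !mxE; case: (unliftP v j) => [k ->| ->].
    rewrite zl eq_sym (negPf (neq_lift v k)) andbF mulr0 addr0.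
    rewrite (bigD1_ord v) //= zv mul0r add0r.
    have := congr1 (fun M : 'rV_ _ => M 0 k) yM; rewrite !mxE => <-.
    by apply: eq_bigr => i _; rewrite zl !mxE.
  by rewrite zv mulr0 add0r /= eqxx mulr1 /c mxE.
have key j : mu * (mu * z 0 j + c * (v == j)%:R) + c * A v j
           = (l1 + l2) * (mu * z 0 j + c * (v == j)%:R) - l1 * l2 * z 0 j.
  have := congr1 (fun M : 'rV_ _ => M 0 j) (mulmxA z A A).
  rewrite AA mulmxBr -scalemxAr zA mulmxDl -!scalemxAl -rowE mul_mx_scalar.
  rewrite zA !mxE /= [j == v]eq_sym => <-; ring.
have c0 : c = 0.
  have := key v; rewrite zv eqxx !mulr0 !add0r mulr1 => E.
  apply/eqP; move: h3; apply: contraR => cn0; apply/eqP.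
  apply: (mulfI cn0); lra.
have : exists k, y 0 k != 0.
  apply/existsP; move: ynz; apply: contraR; rewrite negb_exists => /forallP H.
  by apply/eqP/rowP => k; rewrite mxE; apply/eqP; move: (H k); rewrite negbK.
case=> k yk; have := key (lift v k); rewrite c0 zl !mul0r !addr0 => E.
have : (mu - l1) * (mu - l2) * y 0 k = 0 by lra.
by move/eqP; rewrite !mulf_eq0 (negPf yk) !subr_eq0 (negPf h1) (negPf h2).
Qed.
Section X.
Variable R : realType.

Lemma sum_deltal n (F : 'I_n -> R) i : \sum_l (i == l)%:R * F l = F i.
Proof.
rewrite (bigD1 i) //= eqxx mul1r big1 ?addr0 // => l /negPf.
by rewrite eq_sym => ->; rewrite mul0r.
Qed.

Lemma sum_deltar n (F : 'I_n -> R) j : \sum_l (l == j)%:R * F l = F j.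
Proof.
rewrite (bigD1 j) //= eqxx mul1r big1 ?addr0 // => l /negPf ->; by rewrite mul0r.
Qed.

Lemma entryA n (w d : 'rV[R]_n) (k : R) (W : 'M[R]_n) i j :
  (forall i j, W i j = w 0 i * w 0 j) ->
  ((1%:M - k *: W) *m diag_mx d *m (1%:M - k *: W)) i j =
  (i == j)%:R * d 0 i + w 0 i * w 0 j *
     (k ^+ 2 * (\sum_l w 0 l ^+ 2 * d 0 l) - k * (d 0 i + d 0 j)).
Proof.
move=> hW; rewrite mul_mx_diag mxE.
under eq_bigr => l _ do rewrite !mxE !hW.
transitivity (\sum_l ((i == l)%:R * (d 0 l * (l == j)%:R - k * d 0 l * w 0 l * w 0 j)
   + (- k * w 0 i) * ((l == j)%:R * (w 0 l * d 0 l))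
   + (k ^+ 2 * w 0 i * w 0 j) * (w 0 l ^+ 2 * d 0 l))).
  by apply: eq_bigr => l _; ring.
rewrite !big_split /= -!mulr_sumr sum_deltal sum_deltar.
rewrite eq_sym; ring.
Qed.

Lemma WW n (w : 'rV[R]_n) :
  (w^T *m w) *m (w^T *m w) = (w *m w^T) 0 0 *: (w^T *m w).
Proof.
by rewrite mulmxA -(mulmxA w^T) {1}[w *m w^T]mx11_scalar mul_mx_scalar -scalemxAl.
Qed.

Lemma HH n (w : 'rV[R]_n) : (w *m w^T) 0 0 != 0 ->
  let H := 1%:M - (2 / (w *m w^T) 0 0) *: (w^T *m w) in H *m H = 1%:M.
Proof.
move=> s0 H; rewrite /H mulmxBl !mulmxBr mul1mx mulmx1 -!scalemxAl -!scalemxAr WW.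
set s := (w *m w^T) 0 0; set W := w^T *m w; rewrite !scalerA mul1mx.
have -> : 2 / s * (2 / s) * s = 2 / s + 2 / s by field.
by rewrite scalerDl opprB addrK subrK.
Qed.

Lemma Hsym n (w : 'rV[R]_n) k : (1%:M - k *: (w^T *m w))^T = 1%:M - k *: (w^T *m w).
Proof. by rewrite linearB /= linearZ /= trmx1 trmx_mul trmxK. Qed.

Lemma char_conj n (H D : 'M[R]_n) : H *m H = 1%:M ->
  char_poly (H *m D *m H) = char_poly D.
Proof.
move=> HH1.
pose H' := map_mx (@polyC R) H.
have H'H' : H' *m H' = 1%:M by rewrite -map_mxM HH1 map_mx1.
have E : char_poly_mx (H *m D *m H) = H' *m char_poly_mx D *m H'.
  rewrite /char_poly_mx mulmxBr mulmxBl mul_mx_scalar -scalemxAl H'H' scalemx1.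
  by rewrite !map_mxM.
rewrite /char_poly E !det_mulmx mulrC mulrA -det_mulmx H'H' det1 mul1r.
done.
Qed.
End X.

Lemma avoid (R : realType) (B : seq R) :
  exists c : R, [/\ 0 < c, c <= 1 & forall b, b \in B -> 0 < b -> c < b].
Proof.
elim: B => [|b B [c [c0 c1 cB]]]; first by exists 1; split => //.
case: (ltrP 0 b) => hb.
  exists (Num.min c (b / 2)); split.
  - by rewrite lt_min c0 divr_gt0.
  - by rewrite ge_min c1.
  move=> x; rewrite inE => /orP [/eqP -> _|xB x0].
    by rewrite gt_min; apply/orP; right; lra.
  by rewrite gt_min (cB x xB x0).
exists c; split => // x; rewrite inE => /orP [/eqP -> h|xB x0]; first lra.
exact: cB.
Qed.

Unset Implicit Arguments. Set Strict Implicit.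

Theorem corollary4p4 (R : realType) (l1 l2 : R) (n1 n2 : nat)
  (F D : seq R) :
  l1 != l2 -> (0 < n1)%N -> (0 < n2)%N ->
  l1 \notin F -> l2 \notin F ->
  exists A : 'M[R]_(n1 + n2),
    [/\ SKn A,
        char_poly A = ('X - l1%:P) ^+ n1 * ('X - l2%:P) ^+ n2,
        (forall (v : 'I_(n1 + n2)) (x : R), x \in F -> ~~ eigenvalue (del_vertex A v) x)
      & (forall i : 'I_(n1 + n2), A i i \notin D)].
Proof.
move=> l12 n1p n2p l1F l2F.
pose E := D ++ map (fun f => l1 + l2 - f) F.
pose B := map (fun e => (e - l1) / (4 * n2%:R * (l2 - l1))) E
       ++ map (fun e => (l2 - e) / (4 * n1%:R * (l2 - l1))) E.
have [c [c0 c1 cB]] := avoid B.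
have n1R : 1 <= n1%:R :> R by rewrite ler1n.
have n2R : 1 <= n2%:R :> R by rewrite ler1n.
pose t := c / (n2%:R + 1).
have t0 : 0 < t by rewrite divr_gt0 // ltr_wpDl // ler0n.
have tc : t <= c.
  by rewrite ler_pdivrMr ?ltr_wpDl ?ler0n //; nra.
have n2t : n2%:R * t < 1.
  rewrite /t mulrA ltr_pdivrMr ?ltr_wpDl ?ler0n //; nra.
pose w : 'rV[R]_(n1 + n2) := \row_i (if (i < n1)%N then 1 else t).
pose d : 'rV[R]_(n1 + n2) := \row_i (if (i < n1)%N then l1 else l2).
have wl i : w 0 (lshift n2 i) = 1 by rewrite mxE /= ltn_ord.
have wr i : w 0 (rshift n1 i) = t by rewrite mxE /= ltnNge leq_addr.
have dl i : d 0 (lshift n2 i) = l1 by rewrite mxE /= ltn_ord.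
have dr i : d 0 (rshift n1 i) = l2 by rewrite mxE /= ltnNge leq_addr.
clearbody w d.
pose s := (w *m w^T) 0 0.
have sE : s = n1%:R + n2%:R * t ^+ 2.
  rewrite /s mxE big_split_ord /=.
  under eq_bigr => i _ do rewrite mxE wl mulr1.
  under [X in _ + X = _]eq_bigr => i _ do rewrite mxE wr.
  by rewrite !sumr_const !card_ord mulr_natl -expr2.
pose sig := \sum_l w 0 l ^+ 2 * d 0 l.
have sigE : sig = n1%:R * l1 + n2%:R * t ^+ 2 * l2.
  rewrite /sig big_split_ord /=.
  under eq_bigr => i _ do rewrite wl dl expr1n mul1r.
  under [X in _ + X = _]eq_bigr => i _ do rewrite wr dr.
  by rewrite !sumr_const !card_ord !mulr_natl mulrnAl.
have s1 : 1 <= s.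
  have h : 0 <= n2%:R * t ^+ 2 by apply: mulr_ge0; rewrite ?ler0n ?sqr_ge0.
  rewrite sE; lra.
have s0 : s != 0 by apply/eqP => s0; rewrite s0 in s1; lra.
pose k := 2 / s.
pose W := w^T *m w.
have hW i j : W i j = w 0 i * w 0 j by rewrite !mxE big_ord1 !mxE.
pose H := 1%:M - k *: W.
have HH1 : H *m H = 1%:M by exact: (HH s0).
pose A := H *m diag_mx d *m H.
have Aij i j : A i j = (i == j)%:R * d 0 i + w 0 i * w 0 j *
     (k ^+ 2 * sig - k * (d 0 i + d 0 j)) by exact: entryA.
have wd i : (w 0 i = 1 /\ d 0 i = l1) \/ (w 0 i = t /\ d 0 i = l2).
  by case: (split_ordP i) => j ->; [left|right].
have t1 : t <= 1 by lra.
have tt : t ^+ 2 <= t by rewrite expr2; nra.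
have n2t2 : n2%:R * t ^+ 2 < n1%:R.
  have : n2%:R * t ^+ 2 <= n2%:R * t by rewrite ler_wpM2l ?ler0n.
  lra.
have pos2 : 0 < n2%:R * t ^+ 2 by rewrite mulr_gt0 ?exprn_gt0 // ltr0n.
have l12' : l2 - l1 != 0 by rewrite subr_eq0 eq_sym.
have ATA : A^T = A by rewrite /A /H !trmx_mul tr_diag_mx Hsym mulmxA.
clearbody H.
have AA : A *m A = (l1 + l2) *: A - (l1 * l2)%:M.
  have DD : diag_mx d *m diag_mx d = (l1 + l2) *: diag_mx d - (l1 * l2)%:M.
    apply/matrixP => i j; rewrite mul_diag_mx !mxE.
    case: (i == j); rewrite ?mulr1n ?mulr0n; last by rewrite !mulr0 subr0.
    by case: (wd i) => -[_ ->]; ring.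
  rewrite /A !mulmxA -(mulmxA (H *m diag_mx d) H H) HH1 mulmx1 -(mulmxA H) DD.
  rewrite mulmxBr mulmxBl -scalemxAr -scalemxAl mul_mx_scalar -scalemxAl HH1.
  by rewrite scalemx1.
have Aii i : A i i = d 0 i + w 0 i ^+ 2 * (k ^+ 2 * sig - 2 * k * d 0 i).
  by rewrite Aij eqxx mul1r; ring.
pose r := t ^+ 2 / s ^+ 2.
have sp : 0 < s by lra.
have r0 : 0 < r by rewrite divr_gt0 ?exprn_gt0.
have rc : r <= c.
  have s2 : 1 <= s ^+ 2 by rewrite expr2; nra.
  have : r <= t ^+ 2.
    rewrite ler_pdivrMr ?exprn_gt0 //.
    have t20 : 0 <= t ^+ 2 by rewrite exprn_ge0 // ltW.
    nra.
  lra.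
have sE0 : n1%:R + n2%:R * t ^+ 2 != 0 by rewrite -sE.
have n10 : n1%:R != 0 :> R by rewrite pnatr_eq0 -lt0n.
have n20 : n2%:R != 0 :> R by rewrite pnatr_eq0 -lt0n.
have AiiE i : A i i \in E -> False.
  move=> hE; have : r \in B.
    rewrite mem_cat; case: (wd i) => -[hw hd]; apply/orP; [left|right];
      apply/mapP; exists (A i i) => //;
      rewrite Aii hw hd /r /k sigE sE; field; rewrite ?sE0 ?n10 ?n20 ?l12' //.
  move=> rB; have := cB r rB r0; lra.
exists A; split.
- split => // i j ij; rewrite Aij (negPf ij) mul0r add0r.
  have wn i' : w 0 i' != 0 by case: (wd i') => -[-> _]; [exact: oner_neq0 | exact: lt0r_neq0].
  rewrite !mulf_neq0 //.
  have gE : (k ^+ 2 * sig - k * (d 0 i + d 0 j)) * s ^+ 2 =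
            2 * (2 * sig - s * (d 0 i + d 0 j)) by rewrite /k; field.
  apply/eqP => g0; move: gE; rewrite g0 mul0r => /esym/eqP.
  rewrite mulf_eq0 pnatr_eq0 /= sigE sE.
  case: (wd i) => -[_ ->]; case: (wd j) => -[_ ->].
  + have -> : 2 * (n1%:R * l1 + n2%:R * t ^+ 2 * l2) - (n1%:R + n2%:R * t ^+ 2) * (l1 + l1)
       = (2 * (n2%:R * t ^+ 2)) * (l2 - l1) by ring.
    by rewrite mulf_eq0 (negPf l12') orbF => /eqP h; lra.
  + have -> : 2 * (n1%:R * l1 + n2%:R * t ^+ 2 * l2) - (n1%:R + n2%:R * t ^+ 2) * (l1 + l2)
       = (n2%:R * t ^+ 2 - n1%:R) * (l2 - l1) by ring.
    by rewrite mulf_eq0 (negPf l12') orbF => /eqP h; lra.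
  + have -> : 2 * (n1%:R * l1 + n2%:R * t ^+ 2 * l2) - (n1%:R + n2%:R * t ^+ 2) * (l2 + l1)
       = (n2%:R * t ^+ 2 - n1%:R) * (l2 - l1) by ring.
    by rewrite mulf_eq0 (negPf l12') orbF => /eqP h; lra.
  + have -> : 2 * (n1%:R * l1 + n2%:R * t ^+ 2 * l2) - (n1%:R + n2%:R * t ^+ 2) * (l2 + l2)
       = (- (2 * n1%:R)) * (l2 - l1) by ring.
    by rewrite mulf_eq0 (negPf l12') orbF => /eqP h; lra.
- rewrite /A char_conj // char_poly_trig ?diag_mx_is_trig // big_split_ord /=.
  under eq_bigr => i _ do rewrite mxE eqxx mulr1n dl.
  under [X in _ * X = _]eq_bigr => i _ do rewrite mxE eqxx mulr1n dr.
  by rewrite !prodr_const !card_ord.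
- move=> v x xF; apply: no_eig AA _ _ _.
  + by apply/eqP => ex; move: l1F; rewrite -ex xF.
  + by apply/eqP => ex; move: l2F; rewrite -ex xF.
  apply/eqP => ex; apply: (AiiE v); rewrite mem_cat; apply/orP; right.
  by apply/mapP; exists x => //; rewrite ex; ring.
- move=> i; apply/negP => hD; apply: (AiiE i); by rewrite mem_cat hD.
Qed.
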